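(* Let $uv\in E(G)$. If $\phi$ is a cheapest $(T_1,T_2)$-extension of $G - {uv}$ and $u$ and $v$ are in the same good component of $\phi$, then $uv$ is irrelevant.
   Context: $(G,k,t,T_1,T_2)$ is an instance of the Cheap Coloring Extension problem: $G$ is a bipartite graph, $T_1,T_2$ are disjoint vertex sets with $|T_1|+|T_2|\le t$, and one asks for a $(T_1,T_2)$-extension of cost at most $k$. A 2-coloring of $G$ is any function $\phi: V(G)\to\{1,2\}$; it is a $(T_1,T_2)$-extension if it colors $T_1$ with 1 and $T_2$ with 2. Its cost is $\sum_X(|X|-1)$ over the monochromatic components $X$ (connected components of the subgraphs induced by each color class). A $(T_1,T_2)$-extension is cheapest if no $(T_1,T_2)$-extension has strictly lower cost. An edge $uv$ is good w.r.t. $\phi$ if $\phi(u)\neq\phi(v)$ and bad otherwise; a good component of $\phi$ is the vertex set of a connected component of the graph $(V(G),E')$ where $E'$ is the set of good edges. An edge $e$ is irrelevant if $G$ has a $(T_1,T_2)$-extension of cost at most $k$ if and only if $G-e$ does. *)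

(* Defs.v *)
From mathcomp Require Import all_boot.
Set Implicit Arguments. Unset Strict Implicit. Unset Printing Implicit Defensive.

Definition simple_graph (V : finType) (E : rel V) : Prop :=
  symmetric E /\ irreflexive E.

Definition bipartite (V : finType) (E : rel V) : Prop :=
  exists side : V -> bool, forall x y, E x y -> side x != side y.

Definition del_edge (V : finType) (E : rel V) (u v : V) : rel V :=
  fun x y => E x y && ~~ (((x == u) && (y == v)) || ((x == v) && (y == u))).

(* 2-colorings: phi : V -> bool; color 1 is [true], color 2 is [false]. *)
Definition coloring (V : finType) := V -> bool.

Definition is_extension (V : finType) (T1 T2 : {set V}) (phi : coloring V) :=
  (forall x, x \in T1 -> phi x = true) /\ (forall x, x \in T2 -> phi x = false).

Definition bad_rel (V : finType) (E : rel V) (phi : coloring V) : rel V :=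
  fun x y => E x y && (phi x == phi y).
Definition good_rel (V : finType) (E : rel V) (phi : coloring V) : rel V :=
  fun x y => E x y && (phi x != phi y).

(* monochromatic components: connected components of the subgraphs induced
   by the color classes, i.e. components of the graph of bad edges *)
Definition mono_comps (V : finType) (E : rel V) (phi : coloring V) : {set {set V}} :=
  [set [set y | connect (bad_rel E phi) x y] | x : V].

Definition cost (V : finType) (E : rel V) (phi : coloring V) : nat :=
  \sum_(X in mono_comps E phi) (#|X| - 1).

Definition cheapest_extension (V : finType) (E : rel V) (T1 T2 : {set V})
  (phi : coloring V) : Prop :=
  is_extension T1 T2 phi /\
  forall psi : coloring V, is_extension T1 T2 psi -> cost E phi <= cost E psi.

Definition has_cheap_extension (V : finType) (E : rel V) (k : nat)
  (T1 T2 : {set V}) : Prop :=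
  exists phi : coloring V, is_extension T1 T2 phi /\ cost E phi <= k.

Definition same_good_comp (V : finType) (E : rel V) (phi : coloring V) (u v : V) :=
  connect (good_rel E phi) u v.

Definition irrelevant_edge (V : finType) (E : rel V) (k : nat)
  (T1 T2 : {set V}) (u v : V) : Prop :=
  has_cheap_extension E k T1 T2 <-> has_cheap_extension (del_edge E u v) k T1 T2.

(* Main.v *)
Require Import Defs.
From mathcomp Require Import all_boot.
Set Implicit Arguments. Unset Strict Implicit.

Section S.
Variable V : finType.

Definition cls (e : rel V) : {set {set V}} := [set [set y | connect e x y] | x : V].

Lemma cls_part (e : rel V) : connect_sym e -> partition (cls e) [set: V].
Proof.
move=> sym.
have -> : cls e = equivalence_partition (connect e) [set: V].
  rewrite /cls /equivalence_partition; apply/setP=> X.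
  apply/imsetP/imsetP=> [[x _ ->]|[x _ ->]]; exists x => //;
    apply/setP=> y; rewrite !inE //.
apply: equivalence_partitionP => x y z _ _ _ /=.
split; first exact: connect0.
move=> Hxy; apply/idP/idP => H.
  have Hyx : connect e y x by rewrite sym.
  exact: connect_trans Hyx H.
exact: connect_trans Hxy H.
Qed.

Lemma cls_cost (e : rel V) : connect_sym e ->
  \sum_(X in cls e) (#|X| - 1) = #|V| - #|cls e|.
Proof.
move=> sym.
have -> : #|V| = \sum_(X in cls e) #|X|.
  by rewrite -cardsT (card_partition (cls_part sym)).
rewrite (cardE (cls e)) -sum1_size.
have -> : \sum_(X in cls e) #|X| = \sum_(X in cls e) ((#|X| - 1) + 1).
  apply: eq_bigr => X /imsetP [x _ ->]; rewrite subnK // card_gt0.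
  by apply/set0Pn; exists x; rewrite inE connect0.
rewrite big_split /= big_enum /=; exact: (esym (addnK _ _)).
Qed.

Lemma cls_le (e e' : rel V) : subrel e' e -> connect_sym e -> connect_sym e' ->
  #|cls e| <= #|cls e'|.
Proof.
move=> sub sym sym'.
pose f (Y : {set V}) := if [pick y in Y] is Some y then [set z | connect e y z] else set0.
have -> : cls e = f @: cls e'.
  apply/setP=> X; apply/imsetP/imsetP => [[x _ ->]|[Y /imsetP [x _ ->] ->]].
    exists [set y | connect e' x y]; first by apply/imsetP; exists x.
    rewrite /f; case: pickP => [y|]; last by move/(_ x); rewrite inE connect0.
    rewrite inE => Hxy; have Hxy' : connect e x y.
      by apply: connect_sub Hxy => a b /sub /connect1.
    apply/setP=> z; rewrite !inE; apply/idP/idP => H.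
      have Hyx : connect e y x by rewrite sym.
      exact: connect_trans Hyx H.
    exact: connect_trans Hxy' H.
  exists x => //. rewrite /f; case: pickP => [y|]; last by move/(_ x); rewrite inE connect0.
  rewrite inE => Hxy; have Hxy' : connect e x y.
      by apply: connect_sub Hxy => a b /sub /connect1.
    apply/setP=> z; rewrite !inE; apply/idP/idP => H.
      exact: connect_trans Hxy' H.
    have Hyx : connect e y x by rewrite sym.
    exact: connect_trans Hyx H.
exact: leq_imset_card.
Qed.
End S.

Lemma cost_cls (V : finType) (E : rel V) phi : symmetric E ->
  cost E phi = #|V| - #|cls (bad_rel E phi)|.
Proof.
move=> sE; rewrite /cost /mono_comps -/(cls _) cls_cost //.
apply: sym_connect_sym => x y; by rewrite /bad_rel sE eq_sym.
Qed.

Lemma del_sym (V : finType) (E : rel V) u v : symmetric E -> symmetric (del_edge E u v).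
Proof.
move=> sE x y; rewrite /del_edge sE; congr (_ && ~~ _).
by case: (x==u); case: (y==v); case: (x==v); case: (y==u).
Qed.

Theorem mainTheorem6 (V : finType) (E : rel V) (k t : nat) (T1 T2 : {set V})
  (u v : V) (phi : coloring V) :
  simple_graph E -> bipartite E ->
  [disjoint T1 & T2] -> #|T1| + #|T2| <= t ->
  E u v ->
  cheapest_extension (del_edge E u v) T1 T2 phi ->
  same_good_comp (del_edge E u v) phi u v ->
  irrelevant_edge E k T1 T2 u v.
Proof.
move=> [sE iE] [side Hside] _ _ Euv [extphi cheap] good.
have sD := del_sym u v sE.
have symb : forall F : rel V, symmetric F -> connect_sym (bad_rel F phi).
  move=> F sF; apply: sym_connect_sym => x y; by rewrite /bad_rel sF eq_sym.
split.
  move=> [psi [ext c]]; exists psi; split => //.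
  apply: leq_trans c; rewrite !cost_cls //; apply: leq_sub2l; apply: cls_le.
  - by move=> x y /andP [/andP [H _] H2]; rewrite /bad_rel H H2.
  - apply: sym_connect_sym => x y; by rewrite /bad_rel sE eq_sym.
  - apply: sym_connect_sym => x y; by rewrite /bad_rel sD eq_sym.
move=> [psi [ext c]]; exists phi; split => //.
have Hneq : phi u != phi v.
  have cl : closed (good_rel (del_edge E u v) phi)
      [pred x | (phi x (+) side x) == (phi u (+) side u)].
    move=> x y /andP [/andP [Exy _] Hp]; have Hs := Hside _ _ Exy.
    rewrite !inE; congr (_ == _).
    by move: Hp Hs; case: (phi x); case: (phi y); case: (side x); case: (side y).
  have := closed_connect cl good; rewrite !inE eqxx => /esym /eqP.
  have := Hside _ _ Euv.
  by case: (phi u); case: (phi v); case: (side u); case: (side v).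
have eqb : bad_rel E phi =2 bad_rel (del_edge E u v) phi.
  move=> x y; rewrite /bad_rel /del_edge.
  case: (boolP ((x == u) && (y == v))) => [/andP [/eqP -> /eqP ->]|_].
    by rewrite (negbTE Hneq) !andbF.
  case: (boolP ((x == v) && (y == u))) => [/andP [/eqP -> /eqP ->]|_].
    by rewrite eq_sym (negbTE Hneq) !andbF.
  by rewrite /= andbT.
have -> : cost E phi = cost (del_edge E u v) phi.
  have eqc : forall x, [set y | connect (bad_rel E phi) x y] =
      [set y | connect (bad_rel (del_edge E u v) phi) x y].
    by move=> x; apply/setP=> y; rewrite !inE (eq_connect eqb).
  by rewrite /cost /mono_comps (eq_imset _ eqc).
exact: leq_trans (cheap _ ext) c.
Qed.
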